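(* Let $R$ be a ring, let $T$ be a left denominator set of $R$ with $\mathrm{ass}(T)=0$, and let $\sigma:R\to T^{-1}R$, $r\mapsto\frac{r}{1}$. Then: (1) $T\subseteq S$ for all $S\in\max\mathrm{Den}_l(R)$; (2) the map $\max\mathrm{Den}_l(R)\to\max\mathrm{Den}_l(T^{-1}R)$, $S\mapsto\widetilde{S}$, is a bijection with inverse $\mathcal{T}\mapsto\sigma^{-1}(\mathcal{T})$, where $\widetilde{S}$ is the multiplicative monoid generated in $T^{-1}R$ by $\sigma(S)$ and $\{t^{-1}: t\in T\}$; moreover $S^{-1}R\cong\widetilde{S}^{-1}(T^{-1}R)$.
   Context: All rings are associative with $1$. A multiplicative subset $S$ of $R$ ($1\in S$, $0\notin S$, closed under multiplication) is a left Ore set if $Sr\cap Rs\neq\emptyset$ for all $r\in R$, $s\in S$; for it, $\mathrm{ass}(S):=\{r\in R: sr=0\text{ for some } s\in S\}$. A left Ore set $S$ is a left denominator set if $rs=0$ ($r\in R$, $s\in S$) implies $tr=0$ for some $t\in S$; $S^{-1}R$ is the left localization. $\max\mathrm{Den}_l(R)$ is the set of maximal elements, under inclusion, of the set of left denominator sets of $R$. *)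

(* Defs.v *)
From HB Require Import structures.
From mathcomp Require Import all_boot all_algebra.
Set Implicit Arguments. Unset Strict Implicit. Unset Printing Implicit Defensive.
Import GRing.Theory.
Local Open Scope ring_scope.

Definition mult_subset (R : nzRingType) (S : R -> Prop) : Prop :=
  S 1 /\ ~ S 0 /\ (forall a b, S a -> S b -> S (a * b)).

Definition left_ore (R : nzRingType) (S : R -> Prop) : Prop :=
  mult_subset S /\
  (forall (r s : R), S s -> exists s' r', S s' /\ s' * r = r' * s).

Definition ass (R : nzRingType) (S : R -> Prop) (r : R) : Prop :=
  exists s, S s /\ s * r = 0.

Definition left_den (R : nzRingType) (S : R -> Prop) : Prop :=
  left_ore S /\
  (forall (r s : R), S s -> r * s = 0 -> exists t, S t /\ t * r = 0).

Definition maxDen_l (R : nzRingType) (S : R -> Prop) : Prop :=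
  left_den S /\
  (forall S' : R -> Prop, left_den S' -> (forall x, S x -> S' x) ->
     forall x, S' x -> S x).

Definition is_inverse (A : nzRingType) (u a : A) : Prop :=
  u * a = 1 /\ a * u = 1.

Definition is_left_localization (R A : nzRingType) (S : R -> Prop)
    (f : {rmorphism R -> A}) : Prop :=
  (forall s, S s -> exists u, is_inverse u (f s)) /\
  (forall a : A, exists s r, S s /\ f s * a = f r) /\
  (forall r, f r = 0 <-> ass S r).

Inductive tilde (R Q : nzRingType) (T S : R -> Prop) (sigma : {rmorphism R -> Q})
  : Q -> Prop :=
  | tilde_one : tilde T S sigma 1
  | tilde_img s : S s -> tilde T S sigma (sigma s)
  | tilde_inv t u : T t -> is_inverse u (sigma t) -> tilde T S sigma u
  | tilde_mul a b : tilde T S sigma a -> tilde T S sigma b -> tilde T S sigma (a * b).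

Definition preim_set (R Q : nzRingType) (sigma : {rmorphism R -> Q})
  (TT : Q -> Prop) : R -> Prop := fun r => TT (sigma r).

(* Main.v *)
Require Import Defs.
From HB Require Import structures.
From mathcomp Require Import all_boot all_algebra.
From Stdlib Require Import ClassicalEpsilon FunctionalExtensionality PropExtensionality.
Import GRing.Theory.
Local Open Scope ring_scope.

Inductive gen (X : nzRingType) (A B : X -> Prop) : X -> Prop :=
 | gen1 : gen X A B 1
 | genA x : A x -> gen X A B x
 | genB x : B x -> gen X A B x
 | genM x y : gen X A B x -> gen X A B y -> gen X A B (x * y).
Arguments gen {X}.
Arguments gen1 {X A B}.
Arguments genA {X A B x}.
Arguments genB {X A B x}.
Arguments genM {X A B x y}.

Lemma gen_den (X : nzRingType) (A B W : X -> Prop) :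
  W 1 -> (forall a b, W a -> W b -> W (a * b)) -> ~ W 0 ->
  (forall w, W w -> gen A B w) ->
  (forall x, A x \/ B x -> forall r, exists m r', gen A B m /\ m * r = r' * x) ->
  (forall x, A x \/ B x -> forall r, r * x = 0 -> exists w, W w /\ w * r = 0) ->
  left_den (gen A B).
Proof.
move=> W1 WM W0 Wg Hore Hden.
have P : forall x, gen A B x -> forall r, r * x = 0 -> exists w, W w /\ w * r = 0.
  move=> x; elim=> {x}.
  - by move=> r; rewrite mulr1 => ->; exists 1; rewrite mulr0.
  - by move=> x Ax; apply: Hden; left.
  - by move=> x Bx; apply: Hden; right.
  - move=> x y _ IHx _ IHy r; rewrite mulrA => /IHy [w [Ww E]].
    move: E; rewrite mulrA => /IHx [w' [Ww' E']].
    by exists (w' * w); split; [apply: WM|rewrite -mulrA].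
split; [split; [split; [exact: gen1| split]|]|].
- move=> H0; have [w [Ww E]] := P _ H0 1 (mul1r 0).
  by rewrite mulr1 in E; apply: W0; rewrite -E.
- by move=> a b; apply: genM.
- move=> r s Hs; elim: Hs r => {s}.
  + by move=> r; exists 1, r; split; [exact: gen1| rewrite mul1r mulr1].
  + by move=> x Ax; apply: Hore; left.
  + by move=> x Bx; apply: Hore; right.
  + move=> x y _ IHx _ IHy r.
    have [m1 [r1 [Hm1 E1]]] := IHy r.
    have [m2 [r2 [Hm2 E2]]] := IHx r1.
    exists (m2 * m1), r2; split; first exact: genM.
    by rewrite -mulrA E1 mulrA E2 mulrA.
- move=> r s Hs E; have [w [Ww E']] := P _ Hs r E.
  by exists w; split; [apply: Wg|].
Qed.

Lemma Lreg (X : nzRingType) (T S : X -> Prop) :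
  left_den T -> (forall r, ass T r -> r = 0) -> maxDen_l S ->
  forall t, T t -> S t.
Proof.
move=> [[_ HTore] HTden] Hass [[[[S1 [S0 SM]] HSore] HSden] Smax] t Tt.
have D : left_den (gen S T).
  apply: (@gen_den X S T S) => //.
  - by move=> w Sw; apply: genA.
  - move=> x [Sx|Tx] r.
    + have [s' [r' [Ss' E]]] := HSore r x Sx.
      by exists s', r'; split; [apply: genA|].
    + have [s' [r' [Ss' E]]] := HTore r x Tx.
      by exists s', r'; split; [apply: genB|].
  - move=> x [Sx|Tx] r E.
    + exact: HSden E.
    + have [t' [Tt' E']] := HTden r x Tx E.
      have r0 : r = 0 by apply: Hass; exists t'.
      by exists 1; split; [|rewrite r0 mulr0].
exact: (Smax _ D (fun x Sx => genA Sx) t (genB Tt)).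
Qed.

Lemma Lsat (X : nzRingType) (S : X -> Prop) : maxDen_l S ->
  forall x y, S (y * x) -> (forall r, r * x = 0 -> exists s, S s /\ s * r = 0) -> S x.
Proof.
move=> [[[[S1 [S0 SM]] HSore] HSden] Smax] x y Syx Px.
pose P (x : X) := forall r, r * x = 0 -> exists s, S s /\ s * r = 0.
pose S2 x := (exists y, S (y * x)) /\ P x.
have SS2 : forall x, S x -> S2 x.
  by move=> z Sz; split; [exists 1; rewrite mul1r| move=> r; apply: HSden].
have D : left_den S2.
  split; [split; [split; [|split]|]|].
  - exact: SS2.
  - by move=> [[y0 ]]; rewrite mulr0.
  - move=> a b [[y1 Sa] Pa] [[y2 Sb] Pb]; split.
    + have [s3 [r3 [Ss3 E]]] := HSore y2 _ Sa.
      exists (r3 * y1).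
      have -> : r3 * y1 * (a * b) = r3 * (y1 * a) * b by rewrite !mulrA.
      by rewrite -E -mulrA; apply: SM.
    + move=> r; rewrite mulrA => /Pb [s [Ss E]].
      move: E; rewrite mulrA => /Pa [s' [Ss' E']].
      by exists (s' * s); split; [apply: SM|rewrite -mulrA].
  - move=> r z [[y0 Sz] Pz].
    have [s' [r' [Ss' E]]] := HSore r _ Sz.
    by exists s', (r' * y0); split; [apply: SS2|rewrite E mulrA].
  - move=> r z [_ Pz] /Pz [s [Ss E]].
    by exists s; split; [apply: SS2|].
exact: (Smax _ D SS2 x (conj (ex_intro _ y Syx) Px)).
Qed.

Definition Uset (X : nzRingType) (q : X) := exists u, is_inverse u q.

Lemma U_den (X : nzRingType) : left_den (@Uset X).
Proof.
split; [split; [split; [|split]|]|].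
- by exists 1; split; rewrite mulr1.
- by move=> [u [E _]]; move: E; rewrite mulr0 => /eqP; rewrite eq_sym oner_eq0.
- move=> a b [u [Ea Ea']] [v [Eb Eb']]; exists (v * u); split.
  + by rewrite mulrA -(mulrA v) Ea mulr1.
  + by rewrite mulrA -(mulrA a) Eb' mulr1.
- move=> r s [u [E1 E2]]; exists 1, (r * u); split; first by exists 1; split; rewrite mulr1.
  by rewrite mul1r -mulrA E1 mulr1.
- move=> r s [u [E1 E2]] E; exists 1; split; first by exists 1; split; rewrite mulr1.
  by rewrite mul1r -(mulr1 r) -E2 mulrA E mul0r.
Qed.

Lemma U_ass (X : nzRingType) (r : X) : ass (@Uset X) r -> r = 0.
Proof. by move=> [s [[u [E1 _]] E]]; rewrite -(mul1r r) -E1 -mulrA E mulr0. Qed.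
Arguments gen_den {X A B W}.
Arguments Lreg {X T S}.
Arguments Lsat {X S} HS {x y}.
Arguments U_ass {X r}.


Lemma cancel_unit (X : nzRingType) (x u a b : X) : u * x = 1 -> x * a = x * b -> a = b.
Proof. by move=> E H; rewrite -(mul1r a) -(mul1r b) -E -!mulrA H. Qed.

Arguments cancel_unit {X x u a b}.

Section Iso.
Variables (R A B : nzRingType) (S : R -> Prop) (f : {rmorphism R -> A}) (g : {rmorphism R -> B}).
Hypothesis HS : left_den S.
Hypothesis Hf : is_left_localization S f.
Hypothesis Hg : is_left_localization S g.

Lemma Sore (r s : R) : S s -> exists s' r', S s' /\ s' * r = r' * s.
Proof. by case: HS => [[_ H] _]; apply: H. Qed.
Arguments Sore r {s}.

Lemma Smul a b : S a -> S b -> S (a * b).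
Proof. by case: HS => [[[_ [_ H]] _] _]; apply: H. Qed.

Lemma S1 : S 1.
Proof. by case: HS => [[[H _] _] _]. Qed.

Lemma img_ex (a : A) : exists b : B, forall s r, S s -> f s * a = f r -> g s * b = g r.
Proof.
case: Hf => _ [Hfr _]; case: Hg => Hgu [_ Hgk].
have [s1 [r1 [Ss1 E1]]] := Hfr a.
have [u [Eu1 Eu2]] := Hgu _ Ss1.
exists (u * g r1) => s r Ss E.
have [s3 [r3 [Ss3 E3]]] := Sore s Ss1.
have Ef : f (s3 * r - r3 * r1) = 0.
  by rewrite rmorphB !rmorphM -E -E1 !mulrA -!rmorphM E3 subrr.
have /Hgk : ass S (s3 * r - r3 * r1).
  by case: Hf => _ [_ Hk]; apply/Hk.
rewrite rmorphB !rmorphM => /eqP; rewrite subr_eq0 => /eqP Eg.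
have [v [Ev1 _]] := Hgu _ Ss3.
apply: (cancel_unit Ev1).
by rewrite mulrA -rmorphM E3 rmorphM -mulrA (mulrA (g s1)) Eu2 mul1r Eg.
Qed.

Definition hh (a : A) : B := proj1_sig (constructive_indefinite_description _ (img_ex a)).

Lemma hhK a s r : S s -> f s * a = f r -> g s * hh a = g r.
Proof. move=> Ss E; exact: (proj2_sig (constructive_indefinite_description _ (img_ex a)) s r Ss E). Qed.

Arguments hhK {a s r}.

Lemma gcancel s b1 b2 : S s -> g s * b1 = g s * b2 -> b1 = b2.
Proof. by case: Hg => Hgu _ Ss; have [u [Eu _]] := Hgu _ Ss; exact: (cancel_unit Eu). Qed.

Lemma common (a1 a2 : A) : exists s r1 r2, S s /\ f s * a1 = f r1 /\ f s * a2 = f r2.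
Proof.
case: Hf => _ [Hfr _].
have [s1 [r1 [Ss1 E1]]] := Hfr a1.
have [s2 [r2 [Ss2 E2]]] := Hfr a2.
have [s3 [r3 [Ss3 E3]]] := Sore s1 Ss2.
exists (s3 * s1), (s3 * r1), (r3 * r2); split; first exact: Smul.
by rewrite !rmorphM -!mulrA E1 -E2 !mulrA -!rmorphM E3.
Qed.

Lemma hhB : zmod_morphism hh.
Proof.
move=> a1 a2; have [s [r1 [r2 [Ss [E1 E2]]]]] := common a1 a2.
apply: (@gcancel s) => //.
rewrite (@hhK _ s (r1 - r2)) //; last by rewrite mulrBr E1 E2 rmorphB.
by rewrite mulrBr (hhK Ss E1) (hhK Ss E2) rmorphB.
Qed.

Lemma hh1 : hh 1 = 1.
Proof.
have S1' := S1; apply: (@gcancel 1) => //.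
by rewrite (@hhK 1 1 1) // mulr1.
Qed.

Lemma hhM (a1 a2 : A) : hh (a1 * a2) = hh a1 * hh a2.
Proof.
case: Hf => _ [Hfr _].
have [s1 [r1 [Ss1 E1]]] := Hfr a1.
have [s2 [r2 [Ss2 E2]]] := Hfr a2.
have [s3 [r3 [Ss3 E3]]] := Sore r1 Ss2.
have Ss : S (s3 * s1) by apply: Smul.
apply: (@gcancel (s3 * s1)) => //.
rewrite (@hhK _ _ (r3 * r2)) //; last first.
  by rewrite rmorphM mulrA -(mulrA (f s3)) E1 -rmorphM E3 rmorphM -mulrA E2 -rmorphM.
by rewrite [g (s3 * s1)]rmorphM mulrA -(mulrA (g s3)) (hhK Ss1 E1) -rmorphM E3 [g (r3 * s2)]rmorphM -mulrA (hhK Ss2 E2) -rmorphM.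
Qed.

End Iso.
Arguments hh {R A B S f g}.
Arguments hhK {R A B S f g} HS Hf Hg {a s r}.
Arguments hhB {R A B S f g}.
Arguments hh1 {R A B S f g}.
Arguments hhM {R A B S f g}.
Arguments gcancel {R B S g} Hg {s b1 b2}.

Lemma loc_iso (R A B : nzRingType) (S : R -> Prop) (f : {rmorphism R -> A}) (g : {rmorphism R -> B}) :
  left_den S -> is_left_localization S f -> is_left_localization S g ->
  exists h : {rmorphism A -> B}, bijective h.
Proof.
move=> HS Hf Hg.
pose h1 := hh HS Hf Hg.
pose h2 := hh HS Hg Hf.
pose H : {rmorphism A -> B} := HB.pack h1 (GRing.isZmodMorphism.Build _ _ h1 (hhB HS Hf Hg))
   (GRing.isMonoidMorphism.Build _ _ h1 (hh1 HS Hf Hg, hhM HS Hf Hg)).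
exists H; exists h2.
- move=> a; have [_ [Hfr _]] := Hf; have [s [r [Ss E]]] := Hfr a.
  apply: (gcancel Hf Ss); rewrite (hhK HS Hg Hf Ss (hhK HS Hf Hg Ss E)).
  by rewrite E.
- move=> b; have [_ [Hgr _]] := Hg; have [s [r [Ss E]]] := Hgr b.
  apply: (gcancel Hg Ss); rewrite (hhK HS Hf Hg Ss (hhK HS Hg Hf Ss E)).
  by rewrite E.
Qed.


Set Default Proof Using "All".
Section Main.
Context {R Q : nzRingType} {T : R -> Prop} {sigma : {rmorphism R -> Q}}.
Context (HT : left_den T) (Hass : forall r, ass T r -> r = 0)
        (Hloc : is_left_localization T sigma).

Lemma sig0 r : sigma r = 0 -> r = 0.
Proof. by move=> E; apply: Hass; case: Hloc => _ [_ H]; apply/H. Qed.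

Lemma siginj a b : sigma a = sigma b -> a = b.
Proof.
move=> E; apply/eqP; rewrite -subr_eq0; apply/eqP/sig0.
by rewrite rmorphB E subrr.
Qed.

Lemma Tl t r : T t -> t * r = 0 -> r = 0.
Proof. by move=> Tt E; apply: Hass; exists t. Qed.

Lemma Tr t r : T t -> r * t = 0 -> r = 0.
Proof.
move=> Tt E; case: HT => _ H; have [t' [Tt' E']] := H r t Tt E.
by apply: Hass; exists t'.
Qed.

Arguments Tl {t r}.
Arguments Tr {t r}.

Lemma Tore r t : T t -> exists t' r', T t' /\ t' * r = r' * t.
Proof. by case: HT => [[_ H] _]; apply: H. Qed.
Arguments Tore r {t}.

Lemma Tmul a b : T a -> T b -> T (a * b).
Proof. by case: HT => [[[_ [_ H]] _] _]; apply: H. Qed.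

Lemma T1 : T 1.
Proof. by case: HT => [[[H _] _] _]. Qed.

Lemma Tinv t : T t -> exists u, u * sigma t = 1 /\ sigma t * u = 1.
Proof. by case: Hloc => H _ Tt; have [u [E1 E2]] := H t Tt; exists u. Qed.

Arguments Tinv {t}.

Lemma frac q : exists t r, T t /\ sigma t * q = sigma r.
Proof. by case: Hloc => _ [H _]; apply: H. Qed.

Lemma commonQ q1 q2 : exists t a b, T t /\ sigma t * q1 = sigma a /\ sigma t * q2 = sigma b.
Proof.
have [t1 [a1 [Tt1 E1]]] := frac q1.
have [t2 [a2 [Tt2 E2]]] := frac q2.
have [t3 [r3 [Tt3 E3]]] := Tore t1 Tt2.
exists (t3 * t1), (t3 * a1), (r3 * a2); split; first exact: Tmul.
by rewrite !rmorphM -!mulrA E1 -E2 !mulrA -!rmorphM E3.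
Qed.

Lemma preim_den (TT : Q -> Prop) : left_den TT -> (forall t, T t -> TT (sigma t)) ->
  left_den (preim_set sigma TT).
Proof.
move=> [[[TT1 [TT0 TTM]] TTore] TTden] HTT; rewrite /preim_set.
split; [split; [split; [|split]|]|].
- by rewrite rmorph1.
- by rewrite rmorph0.
- by move=> a b Ha Hb; rewrite rmorphM; apply: TTM.
- move=> r x Hx.
  have [q1 [q2 [Hq1 E]]] := TTore (sigma r) _ Hx.
  have [t [a [b [Tt [Ea Eb]]]]] := commonQ q1 q2.
  exists a, b; split; first by rewrite -Ea; apply: TTM => //; apply: HTT.
  by apply: siginj; rewrite !rmorphM -Ea -Eb -!mulrA E.
- move=> r x Hx E.
  have E' : sigma r * sigma x = 0 by rewrite -rmorphM E rmorph0.
  have [q [Hq Eq]] := TTden _ _ Hx E'.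
  have [t [a [Tt Ea]]] := frac q.
  exists a; split; first by rewrite -Ea; apply: TTM => //; apply: HTT.
  by apply: sig0; rewrite rmorphM -Ea -mulrA Eq mulr0.
Qed.

Definition SQ (S : R -> Prop) (q : Q) := exists t s, T t /\ S s /\ sigma t * q = sigma s.

Section WithS.
Context {S : R -> Prop} (HS : maxDen_l S).

Lemma HSd : left_den S.
Proof. by case: HS. Qed.

Lemma Sore' (r s : R) : S s -> exists s' r', S s' /\ s' * r = r' * s.
Proof. by case: HSd => [[_ H] _]; apply: H. Qed.
Arguments Sore' r {s}.

Lemma Sden' r s : S s -> r * s = 0 -> exists t, S t /\ t * r = 0.
Proof. by case: HSd => _ H; apply: H. Qed.
Arguments Sden' {r s}.

Lemma Smul' a b : S a -> S b -> S (a * b).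
Proof. by case: HSd => [[[_ [_ H]] _] _]; apply: H. Qed.

Lemma S1' : S 1.
Proof. by case: HSd => [[[H _] _] _]. Qed.

Lemma S0' : ~ S 0.
Proof. by case: HSd => [[[_ [H _]] _] _]. Qed.

Lemma TS t : T t -> S t.
Proof. exact: (Lreg HT Hass HS). Qed.

Lemma sat_left t r : T t -> S (t * r) -> S r.
Proof.
move=> Tt Str; apply: (Lsat HS Str) => x Ex.
have [t' [x' [Tt' E]]] := Tore x Tt.
have [s' [Ss' E']] : exists s', S s' /\ s' * x' = 0.
  by apply: (Sden' Str); rewrite mulrA -E -mulrA Ex mulr0.
exists (s' * t'); split; first by apply: Smul' => //; apply: TS.
by rewrite -mulrA E mulrA E' mul0r.
Qed.

Arguments sat_left {t r}.

Lemma sat_right t x : T t -> S (x * t) -> S x.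
Proof.
move=> Tt Sxt.
have [s5 [r5 [Ss5 E]]] := Sore' t Sxt.
have E' : s5 = r5 * x.
  apply/eqP; rewrite -subr_eq0; apply/eqP; apply: (Tr Tt).
  by rewrite mulrBl E mulrA subrr.
apply: (Lsat HS (y := r5)); first by rewrite -E'.
move=> r Er; apply: (Sden' Sxt); by rewrite mulrA Er mul0r.
Qed.

Arguments sat_right {t x}.

Lemma SQ_img s : S s -> SQ S (sigma s).
Proof. by move=> Ss; exists 1, s; rewrite rmorph1 mul1r; split => //; exact: T1. Qed.

Lemma SQ_mul a b : SQ S a -> SQ S b -> SQ S (a * b).
Proof.
move=> [t1 [s1 [Tt1 [Ss1 E1]]]] [t2 [s2 [Tt2 [Ss2 E2]]]].
have [t3 [r3 [Tt3 E3]]] := Tore s1 Tt2.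
have Sr3 : S r3 by apply: (sat_right Tt2); rewrite -E3; apply: Smul'; [apply: TS|].
exists (t3 * t1), (r3 * s2); split; first exact: Tmul.
split; first exact: Smul'.
by rewrite rmorphM mulrA -(mulrA (sigma t3)) E1 -rmorphM E3 rmorphM -mulrA E2 -rmorphM.
Qed.

Lemma tilde_SQ q : tilde T S sigma q <-> SQ S q.
Proof.
split.
- elim=> {q}.
  + by rewrite -(rmorph1 sigma); apply: SQ_img; exact: S1'.
  + by move=> s Ss; apply: SQ_img.
  + move=> t u Tt [_ E]; exists t, 1; split => //; split; first exact: S1'.
    by rewrite E rmorph1.
  + by move=> a b _ Ha _ Hb; apply: SQ_mul.
- move=> [t [s [Tt [Ss E]]]].
  have [u [E1 E2]] := Tinv Tt.
  have -> : q = u * sigma s by rewrite -E mulrA E1 mul1r.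
  apply: tilde_mul; last by apply: tilde_img.
  by apply: (@tilde_inv _ _ _ _ _ t) => //; split.
Qed.

Lemma SQ_num t a q : SQ S q -> T t -> sigma t * q = sigma a -> S a.
Proof.
move=> Hq Tt E.
have : SQ S (sigma t * q) by apply: SQ_mul => //; apply: SQ_img; apply: TS.
rewrite E => -[t0 [s0 [Tt0 [Ss0 E0]]]].
apply: (sat_left Tt0); suff -> : t0 * a = s0 by [].
by apply: siginj; rewrite rmorphM.
Qed.

Arguments SQ_num {t a q}.

Lemma SQ_preim r : SQ S (sigma r) <-> S r.
Proof.
split; last exact: SQ_img.
move=> H; apply: (SQ_num H T1); by rewrite rmorph1 mul1r.
Qed.

Lemma SQ_den : left_den (SQ S).
Proof.
split; [split; [split; [|split]|]|].
- by rewrite -(rmorph1 sigma); apply: SQ_img; exact: S1'.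
- move=> [t [s [_ [Ss E]]]]; apply: S0'.
  suff -> : (0 : R) = s by [].
  by apply: siginj; rewrite -E mulr0 rmorph0.
- exact: SQ_mul.
- move=> q x [t [s [Tt [Ss E]]]].
  have [t1 [r [Tt1 Eq]]] := frac q.
  have [s2 [r2 [Ss2 E2]]] := Sore' r Ss.
  exists (sigma (s2 * t1)), (sigma r2 * sigma t); split.
    by apply: SQ_img; apply: Smul' => //; apply: TS.
  by rewrite rmorphM -mulrA Eq -rmorphM E2 rmorphM -E mulrA.
- move=> q x [t [s [Tt [Ss E]]]] Eqx.
  have [t1 [r [Tt1 Eq]]] := frac q.
  have [t3 [r3 [Tt3 E3]]] := Tore r Tt.
  have Hr3s : r3 * s = 0.
    apply: sig0; rewrite rmorphM -E mulrA -rmorphM -E3 rmorphM -Eq.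
    by rewrite -!mulrA Eqx !mulr0.
  have [s' [Ss' E']] := Sden' Ss Hr3s.
  exists (sigma (s' * t3 * t1)); split.
    by apply: SQ_img; apply: Smul'; [apply: Smul' => //|]; apply: TS.
  rewrite rmorphM -mulrA Eq -rmorphM -mulrA E3 mulrA E' mul0r.
  by rewrite rmorph0.
Qed.

Lemma SQ_max : maxDen_l (SQ S).
Proof.
split; first exact: SQ_den.
move=> TT HTT Hsub q Hq.
have Hpre : forall r, preim_set sigma TT r -> S r.
  case: HS => _ Hmax; apply: (Hmax (preim_set sigma TT)).
  - by apply: preim_den => // t Tt; apply: Hsub; apply: SQ_img; apply: TS.
  - by move=> s Ss; apply: Hsub; apply: SQ_img.
have [t [a [Tt Ea]]] := frac q.
exists t, a; split => //; split => //; apply: Hpre; rewrite /preim_set -Ea.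
case: HTT => [[[_ [_ HM]] _] _]; apply: HM => //.
by apply: Hsub; apply: SQ_img; apply: TS.
Qed.

End WithS.

Lemma sT_in (TT : Q -> Prop) : maxDen_l TT -> forall t, T t -> TT (sigma t).
Proof.
move=> HTT t Tt; apply: (Lreg (U_den Q) (@U_ass Q) HTT).
by have [u [E1 E2]] := Tinv Tt; exists u; split.
Qed.

Arguments sT_in {TT}.

Lemma part3a (TT : Q -> Prop) : maxDen_l TT -> maxDen_l (preim_set sigma TT).
Proof.
move=> HTT; have sT := sT_in HTT.
case: (HTT) => [[[[TT1 [TT0 TTM]] TTore] TTden] TTmax].
split; first by apply: preim_den => //; case: HTT.
move=> S' HS' Hsub.
case: (HS') => [[[S'1 [S'0 S'M]] S'ore] S'den].
pose W := fun q => exists s, S' s /\ q = sigma s.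
have Dg : left_den (gen TT W).
  apply: (@gen_den Q TT W W).
  - by exists 1; rewrite rmorph1.
  - by move=> a b [s1 [Hs1 ->]] [s2 [Hs2 ->]]; exists (s1 * s2); rewrite rmorphM; split => //; apply: S'M.
  - move=> [s [Ss E]]; apply: S'0; suff <- : s = 0 by [].
    by apply: sig0; rewrite -E.
  - by move=> w Hw; apply: genB.
  - move=> x [Hx|[s' [Ss' ->]]] q.
    + have [m [r' [Hm E]]] := TTore q x Hx.
      by exists m, r'; split => //; apply: genA.
    + have [t [r [Tt Eq]]] := frac q.
      have [s2 [r2 [Ss2 E2]]] := S'ore r s' Ss'.
      exists (sigma s2 * sigma t), (sigma r2); split.
        by apply: genM; [apply: genB; exists s2|apply: genA; apply: sT].
      by rewrite -mulrA Eq -!rmorphM E2.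
  - move=> x [Hx|[s' [Ss' ->]]] q Eqx.
    + have [y [Hy Ey]] := TTden q x Hx Eqx.
      have [t [a [Tt Ea]]] := frac y.
      exists (sigma a); split; last by rewrite -Ea -mulrA Ey mulr0.
      exists a; split => //; apply: Hsub; rewrite /preim_set -Ea.
      by apply: TTM => //; apply: sT.
    + have [t [r [Tt Eq]]] := frac q.
      have rs0 : r * s' = 0 by apply: sig0; rewrite rmorphM -Eq -mulrA Eqx mulr0.
      have [s2 [Hs2 E2]] := S'den r s' Ss' rs0.
      exists (sigma (s2 * t)); split.
        by exists (s2 * t); split => //; apply: S'M => //; apply: Hsub; apply: sT.
      by rewrite rmorphM -mulrA Eq -rmorphM E2 rmorph0.
have Hgen : forall q, gen TT W q -> TT q := TTmax _ Dg (fun q Hq => genA Hq).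
move=> s Ss; rewrite /preim_set; apply: Hgen; apply: genB; by exists s.
Qed.

Lemma part3b (TT : Q -> Prop) : maxDen_l TT -> forall q, SQ (preim_set sigma TT) q <-> TT q.
Proof.
move=> HTT q; have sT := sT_in HTT.
case: (HTT) => [[[[TT1 [TT0 TTM]] TTore] TTden] TTmax].
split.
- move=> [t [s [Tt [Hs E]]]]; have [u [E1 E2]] := Tinv Tt.
  have -> : q = u * sigma s by rewrite -E mulrA E1 mul1r.
  apply: TTM => //; apply: (Lreg (U_den Q) (@U_ass Q) HTT).
  by exists (sigma t); split.
- move=> Hq; have [t [a [Tt Ea]]] := frac q.
  exists t, a; split => //; split => //; rewrite /preim_set -Ea.
  by apply: TTM => //; apply: sT.
Qed.

Lemma part4 (S : R -> Prop) : maxDen_l S ->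
  forall (A : nzRingType) (f : {rmorphism R -> A}) (B : nzRingType) (g : {rmorphism Q -> B}),
  is_left_localization S f -> is_left_localization (SQ S) g ->
  exists h : {rmorphism A -> B}, bijective h.
Proof.
move=> HS A f B g Hf Hg.
apply: (@loc_iso R A B S f (g \o sigma) (HSd HS) Hf).
case: Hg => Hgu [Hgr Hgk].
split; [|split].
- by move=> s Ss /=; apply: Hgu; apply: SQ_img.
- move=> b; have [x [q [Hx E]]] := Hgr b.
  have [t [a [c [Tt [Ea Ec]]]]] := commonQ x q.
  exists a, c; split; first exact: (SQ_num HS t a x Hx Tt Ea).
  by rewrite /= -Ea -Ec !rmorphM -mulrA E.
- move=> r /=; split.
  + move/Hgk => [x [[t [s [Tt [Ss E]]]] Ex]].
    exists s; split => //; apply: sig0.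
    by rewrite rmorphM -E -mulrA Ex mulr0.
  + move=> [s [Ss E]]; apply/Hgk; exists (sigma s); split; first exact: SQ_img.
    by rewrite -rmorphM E rmorph0.
Qed.

End Main.

Unset Default Proof Using.
Theorem theorem3p11 (R : nzRingType) (T : R -> Prop)
  (Q : nzRingType) (sigma : {rmorphism R -> Q}) :
  left_den T ->
  (forall r, ass T r -> r = 0) ->
  is_left_localization T sigma ->
  (* (1) *)
  (forall S : R -> Prop, maxDen_l S -> forall t, T t -> S t) /\
  (* (2) S |-> tilde S maps maxDen_l(R) into maxDen_l(T^{-1}R), and
     sigma^{-1} is a left inverse of it *)
  (forall S : R -> Prop, maxDen_l S ->
     maxDen_l (tilde T S sigma) /\
     (forall r, preim_set sigma (tilde T S sigma) r <-> S r)) /\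
  (* TT |-> sigma^{-1}(TT) maps maxDen_l(T^{-1}R) into maxDen_l(R), and
     tilde is a left inverse of it *)
  (forall TT : Q -> Prop, maxDen_l TT ->
     maxDen_l (preim_set sigma TT) /\
     (forall q, tilde T (preim_set sigma TT) sigma q <-> TT q)) /\
  (* S^{-1}R is isomorphic to (tilde S)^{-1}(T^{-1}R) *)
  (forall S : R -> Prop, maxDen_l S ->
     forall (A : nzRingType) (f : {rmorphism R -> A})
            (B : nzRingType) (g : {rmorphism Q -> B}),
       is_left_localization S f ->
       is_left_localization (tilde T S sigma) g ->
       exists h : {rmorphism A -> B}, bijective h).
Proof.
move=> HT Hass Hloc.
have tildeE : forall S, maxDen_l S -> tilde T S sigma = @SQ R Q T sigma S.
  move=> S HS; apply: functional_extensionality => q.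
  by apply: propositional_extensionality; apply: (tilde_SQ HT Hass Hloc HS).
split; first by move=> S HS t Tt; apply: (TS HT Hass Hloc HS).
split.
  move=> S HS; rewrite (tildeE S HS); split; first exact: (SQ_max HT Hass Hloc HS).
  by move=> r; rewrite /preim_set; apply: (SQ_preim HT Hass Hloc HS).
split.
  move=> TT HTT; have H3 := part3a HT Hass Hloc TT HTT; split => //.
  by move=> q; rewrite (tildeE _ H3); apply: (part3b HT Hass Hloc TT HTT).
move=> S HS A f B g Hf Hg; rewrite (tildeE S HS) in Hg.
exact: (part4 HT Hass Hloc S HS A f B g Hf Hg).
Qed.
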